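(* Let $\mathcal{H},\mathcal{K}$ be real or complex Hilbert spaces and let $S:\mathcal{H}\to\mathcal{K}$ and $T:\mathcal{K}\to\mathcal{H}$ be (not necessarily densely defined or closed) linear operators such that $$\operatorname{ran}(S\cap T^* )=\mathcal{K}\qquad\text{and}\qquad \operatorname{ran}(T\cap S^* )=\mathcal{H}.$$ Then $S$ and $T$ are both densely defined operators such that $S^*=T$ and $T^*=S$.
   Context: Linear operators have domains that are linear subspaces and are identified with their graphs, i.e. viewed as linear relations (linear subspaces of the product space). For a linear relation $R\subset\mathcal{H}\times\mathcal{K}$ its adjoint is the closed linear relation $R^*=\{(k',h')\in\mathcal{K}\times\mathcal{H}:\langle k,k'\rangle=\langle h,h'\rangle \text{ for all }(h,k)\in R\}$; for a densely defined operator this is the usual adjoint operator, but in general $R^*$ may be multivalued. $S\cap T^*$ denotes the intersection of the graph of $S$ with the relation $T^*$ (an operator), and $\operatorname{ran}$ denotes the range, i.e. the set of second coordinates. *)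

(* Defs.v *)
From HB Require Import structures.
From mathcomp Require Import all_boot all_order all_algebra.
From mathcomp Require Import all_classical all_reals.
From mathcomp Require Export complex.
Set Implicit Arguments. Unset Strict Implicit. Unset Printing Implicit Defensive.
Import Order.TTheory GRing.Theory Num.Theory.
Local Open Scope ring_scope.

Section Hilbert.
Variables (K : numFieldType) (conj : K -> K) (V : lmodType K).

Definition is_inner_product (ip : V -> V -> K) : Prop :=
  [/\ (forall a x y z, ip (a *: x + y) z = a * ip x z + ip y z),
      (forall x y, ip x y = conj (ip y x)),
      (forall x, 0 <= ip x x) &
      (forall x, ip x x = 0 -> x = 0)].

(* completeness w.r.t. the norm ||x|| = sqrt <x,x>
   (we use ||x||^2 = |<x,x>| < e, equivalent to ||x|| < sqrt e) *)
Definition ip_complete (ip : V -> V -> K) : Prop :=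
  forall u : nat -> V,
    (forall e : K, 0 < e -> exists N : nat, forall n m : nat, (N <= n)%N -> (N <= m)%N ->
        `|ip (u n - u m) (u n - u m)| < e) ->
    exists x : V, forall e : K, 0 < e -> exists N : nat, forall n : nat, (N <= n)%N ->
        `|ip (u n - x) (u n - x)| < e.

Definition hilbert (ip : V -> V -> K) : Prop := is_inner_product ip /\ ip_complete ip.

Definition ip_dense (ip : V -> V -> K) (D : set V) : Prop :=
  forall x : V, forall e : K, 0 < e -> exists2 d, D d & `|ip (x - d) (x - d)| < e.
End Hilbert.

(* A linear operator V -> W: a linear subspace D (domain) and a map S that is
   linear on D; its graph is {(x, S x) | x in D} (values off D are irrelevant). *)
Definition linear_operator (K : numFieldType) (V W : lmodType K)
    (D : set V) (S : V -> W) : Prop :=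
  D 0 /\ forall a x y, D x -> D y -> D (a *: x + y) /\ S (a *: x + y) = a *: S x + S y.

(* (x', y') in V x W belongs to the adjoint relation T^* of the operator
   T : W -> V with domain DT (graph {(k, T k) | k in DT} in W x V):
   <T k, x'> = <k, y'> for all k in DT. *)
Definition in_adjoint (K : numFieldType) (V W : lmodType K)
    (ipV : V -> V -> K) (ipW : W -> W -> K) (DT : set W) (T : W -> V)
    (x' : V) (y' : W) : Prop :=
  forall k, DT k -> ipV (T k) x' = ipW k y'.

(* Main.v *)
Require Import Defs.
From HB Require Import structures.
From mathcomp Require Import all_boot all_order all_algebra.
From mathcomp Require Import all_classical all_reals.
From mathcomp Require Import complex.
From mathcomp Require Import ring lra zify.
Import Order.TTheory GRing.Theory Num.Theory.
Local Open Scope ring_scope.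
Set Implicit Arguments. Unset Strict Implicit. Unset Printing Implicit Defensive.

Section Alg.
Variables (K : numFieldType) (conj : K -> K).

Lemma lin0 (V W : lmodType K) (D : set V) (S : V -> W) :
  linear_operator D S -> S 0 = 0.
Proof.
move=> [D0 HS]; have [_] := HS 1 0 0 D0 D0.
rewrite !scale1r addr0 => e.
by have := addrK (S 0) (S 0); rewrite -e subrr => /esym.
Qed.

Lemma linB (V W : lmodType K) (D : set V) (S : V -> W) x y :
  linear_operator D S -> D x -> D y -> D (x - y) /\ S (x - y) = S x - S y.
Proof.
move=> [D0 HS] Dx Dy.
have e : x - y = (-1) *: y + x by rewrite scaleN1r addrC.
rewrite e; have [D1 ->] := HS (-1) y x Dy Dx.
by split => //; rewrite scaleN1r addrC.
Qed.

Variables (V : lmodType K) (ip : V -> V -> K).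
Hypothesis Hip : is_inner_product conj ip.

Lemma ip0l z : ip 0 z = 0.
Proof.
case: Hip => HL _ _ _; have := HL 1 0 0 z.
rewrite scale1r addr0 mul1r => e.
by have := addrK (ip 0 z) (ip 0 z); rewrite -e subrr => /esym.
Qed.

Lemma ipDl x y z : ip (x + y) z = ip x z + ip y z.
Proof. by case: Hip => HL _ _ _; rewrite -{1}[x]scale1r HL mul1r. Qed.

Lemma ipZl a x z : ip (a *: x) z = a * ip x z.
Proof. by case: Hip => HL _ _ _; rewrite -[a *: x]addr0 HL ip0l addr0. Qed.

Lemma ipNl x z : ip (- x) z = - ip x z.
Proof. by rewrite -scaleN1r ipZl mulN1r. Qed.

Lemma ipBl x y z : ip (x - y) z = ip x z - ip y z.
Proof. by rewrite ipDl ipNl. Qed.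
End Alg.

Lemma adj_char (K : numFieldType) (conj : K -> K) (H W : lmodType K)
  (ipH : H -> H -> K) (ipK : W -> W -> K) (DS : set H) (S : H -> W)
  (DT : set W) (T : W -> H) :
 is_inner_product conj ipH -> is_inner_product conj ipK ->
 linear_operator DS S -> linear_operator DT T ->
 (forall y, exists2 x, DS x & S x = y /\ in_adjoint ipH ipK DT T x (S x)) ->
 (forall x, exists2 y, DT y & T y = x /\ in_adjoint ipK ipH DS S y (T y)) ->
 forall k' h', in_adjoint ipK ipH DS S k' h' <-> DT k' /\ h' = T k'.
Proof.
move=> IH IK LS LT h1 h2 k' h'.
have [HL HC HP HD] := IH; have [KL KC KP KD] := IK.
split.
- move=> adj; have [y Dy [Ty ay]] := h2 h'.
  have [g Dg [Sg _]] := h1 (k' - y).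
  have : ipK (k' - y) (k' - y) = 0.
    by rewrite -{2}Sg (ipBl IK) (KC k') (KC y) adj // ay // Ty subrr.
  move/KD/eqP; rewrite subr_eq0 => /eqP ->.
  by split => //; rewrite Ty.
- move=> [Dk ->] h Dh; have [x Dx [Sx ax]] := h1 (S h).
  have [y' Dy' [Ty' ay']] := h2 (T k').
  have [Dhx Shx] := linB LS Dh Dx.
  have e1 := ay' _ Dhx.
  rewrite Shx Sx subrr (ip0l IK) Ty' (ipBl IH) in e1.
  have -> : ipH h (T k') = ipH x (T k').
    by apply/eqP; rewrite -subr_eq0 -e1.
  by rewrite (HC x) (KC (S h)) ax // Sx.
Qed.

Section RealDense.
Variables (R : realType) (V : lmodType R) (ip : V -> V -> R).
Hypothesis Hip : is_inner_product id ip.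
Hypothesis Hc : ip_complete ip.
Variable D : set V.
Hypothesis D0 : D 0.
Hypothesis DL : forall a x y, D x -> D y -> D (a *: x + y).
Hypothesis Orth : forall z, (forall h, D h -> ip h z = 0) -> z = 0.

Local Notation N v := (ip v v).
Let HC : forall x y, ip x y = ip y x. Proof. by case: Hip. Qed.
Let HP : forall x, 0 <= N x. Proof. by case: Hip. Qed.

Lemma ipBr x y z : ip z (x - y) = ip z x - ip z y.
Proof. by rewrite HC (ipBl Hip) (HC x) (HC y). Qed.
Lemma ipZr a x z : ip z (a *: x) = a * ip z x.
Proof. by rewrite HC (ipZl Hip) (HC x). Qed.
Lemma ipDr x y z : ip z (x + y) = ip z x + ip z y.
Proof. by rewrite HC (ipDl Hip) (HC x) (HC y). Qed.

Lemma NB a t h : N (a - t *: h) = N a - 2 * t * ip a h + t ^+ 2 * N h.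
Proof.
rewrite (ipBl Hip) !ipBr !(ipZl Hip) !ipZr (HC h a); ring.
Qed.

Lemma parallelogram a b : N (a + b) + N (a - b) = 2 * N a + 2 * N b.
Proof.
rewrite (ipDl Hip a b) (ipBl Hip a b) (ipDr a b) (ipDr a b) (ipBr a b) (ipBr a b).
rewrite (HC b a); ring.
Qed.

Lemma Nopp v : N (- v) = N v.
Proof. by rewrite (ipNl Hip) -scaleN1r ipZr mulN1r opprK. Qed.

Lemma CSbound w h : (ip w h) ^+ 2 <= (N h + 1) * N w.
Proof.
set g := ip w h; set M := N h + 1.
have M0 : 0 < M by rewrite /M; have := HP h; lra.
set s := g / M.
have sM : s * M = g by rewrite /s mulfVK // gt_eqF.
have := HP (w - s *: h); rewrite NB -/g => H0.
have Nh0 := HP h.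
rewrite -sM.
rewrite -sM in H0.
have H1 : M * (2 * s * (s * M) - s ^+ 2 * N h) <= M * N w.
  by rewrite ler_wpM2l ?(ltW M0) //; lra.
have H2 : 0 <= s ^+ 2 * M by rewrite mulr_ge0 ?sqr_ge0 ?(ltW M0).
have -> : M = N h + 1 by [].
rewrite /M in H1 H2; nra.
Qed.

Lemma archi_small (c : R) : 0 < c -> exists K : nat, forall n, (K <= n)%N -> n.+1%:R^-1 < c.
Proof.
move=> c0; have ci : 0 <= c^-1 by rewrite invr_ge0 ltW.
have := archi_boundP ci.
set K := Num.Def.archi_bound _ => HK; exists K => n Kn.
rewrite -(invrK c) ltf_pV2 ?posrE ?invr_gt0 //.
apply: (lt_le_trans HK); rewrite ler_nat; lia.
Qed.

Lemma arith (c g M Nh q : R) : 0 < M -> Nh + 1 = M -> 0 <= Nh -> c != 0 ->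
  16 * g ^+ 2 < c ^+ 2 -> 2 * (c / M) * (c - g) - (c / M) ^+ 2 * Nh < q ->
  q < c ^+ 2 / (2 * M) -> False.
Proof.
move=> M0 eM Nh0 cn0 gc key qc.
have c2 : 0 < c ^+ 2 by rewrite lt_def sqrf_eq0 cn0 sqr_ge0.
set t := c / M in key.
have tM : t * M = c by rewrite /t mulfVK // gt_eqF.
have qM : q * M < c ^+ 2 / 2.
  have -> : c ^+ 2 / 2 = c ^+ 2 / (2 * M) * M.
    by rewrite invfM mulrA mulfVK // gt_eqF.
  by rewrite ltr_pM2r.
have k2 : (2 * t * (c - g) - t ^+ 2 * Nh) * M < q * M by rewrite ltr_pM2r.
have tc : 0 <= t * c by rewrite -tM; nra.
have k3 : 2 * c * (c - g) - t * c * Nh < c ^+ 2 / 2.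
  rewrite -tM; rewrite -tM in qM; nra.
have k4 : t * c * Nh <= c ^+ 2 by rewrite -{2}tM; nra.
have k5 : c ^+ 2 / 4 < c * g by nra.
have k6 : (c ^+ 2 / 4) ^+ 2 < (c * g) ^+ 2.
  by rewrite ltr_pXn2r // ?nnegrE; nra.
nra.
Qed.

Lemma dense_real : ip_dense ip D.
Proof.
move=> x e e0.
pose A : set R := fun y => exists2 d, D d & N (x - d) = y.
have A0 : A (N (x - 0)) by exists 0.
have lbA : has_lbound A by exists 0 => _ [d _ <-]; exact: HP.
have hinf : has_inf A by split => //; exists (N (x - 0)).
set dl := inf A.
have infle : forall d, D d -> dl <= N (x - d).
  by move=> d Dd; apply: (ge_inf lbA); exists d.
have seqP : forall n : nat, exists d, D d /\ N (x - d) < dl + n.+1%:R^-1.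
  move=> n; have n0 : 0 < n.+1%:R^-1 :> R by rewrite invr_gt0 ltr0Sn.
  by have [_ [d Dd <-] lt] := inf_adherent n0 hinf; exists d.
have [ds Hds] := choice seqP.
have Dds n : D (ds n) := (Hds n).1.
have Nds n : N (x - ds n) < dl + n.+1%:R^-1 := (Hds n).2.
have cauchy n m : N (ds n - ds m) <= 2 * n.+1%:R^-1 + 2 * m.+1%:R^-1.
  have par : N ((x - ds m) + (x - ds n)) + N ((x - ds m) - (x - ds n))
      = 2 * N (x - ds m) + 2 * N (x - ds n).
    by rewrite parallelogram.
  have Dmid : D (2^-1 *: (ds n + ds m)).
    rewrite -[_ *: _]addr0; apply: DL => //.
    by rewrite -[ds n]scale1r; apply: DL.
  have ab : (x - ds m) + (x - ds n) = 2 *: (x - 2^-1 *: (ds n + ds m)).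
    rewrite scalerBr scalerA divff ?pnatr_eq0 // scale1r scaler_nat mulr2n.
    by rewrite addrACA -opprD (addrC (ds m)).
  have Nab : N ((x - ds m) + (x - ds n)) = 4 * N (x - 2^-1 *: (ds n + ds m)).
    by rewrite ab (ipZl Hip) ipZr; ring.
  have eb : (x - ds m) - (x - ds n) = ds n - ds m.
    by rewrite opprB addrC addrA subrK.
  rewrite eb in par.
  have := infle _ Dmid; have := Nds n; have := Nds m.
  move: (n.+1%:R^-1) (m.+1%:R^-1) => a b; lra.
have [p Hp] : exists p, forall e, 0 < e -> exists K, forall n, (K <= n)%N ->
    `|N (ds n - p)| < e.
  apply: Hc => e1 e10.
  have e14 : 0 < e1 / 4 by rewrite divr_gt0.
  have [K HK] := archi_small e14.
  exists K => n m Kn Km; rewrite ger0_norm ?HP //.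
  have := cauchy n m; have := HK n Kn; have := HK m Km; move: (n.+1%:R^-1) (m.+1%:R^-1) => a b; lra.
have orth : forall h, D h -> ip h (x - p) = 0.
  move=> h Dh; rewrite HC; set c := ip (x - p) h.
  have [->//|cn0] := eqVneq c 0.
  exfalso.
  have M0 : 0 < N h + 1 by have := HP h; lra.
  have c2 : 0 < c ^+ 2 by rewrite lt_def sqrf_eq0 cn0 sqr_ge0.
  have key n t : 2 * t * ip (x - ds n) h - t ^+ 2 * N h < n.+1%:R^-1.
    have Dt : D (t *: h + ds n) by apply: DL.
    have := infle _ Dt.
    have -> : x - (t *: h + ds n) = (x - ds n) - t *: h.
      by rewrite opprD addrA addrAC.
    rewrite NB; have := Nds n; move: (n.+1%:R^-1) => a; lra.
  have dec n : ip (x - ds n) h = c - ip (ds n - p) h.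
    by rewrite -(ipBl Hip) opprB addrA subrK.
  have e1 : 0 < c ^+ 2 / (16 * (N h + 1)) by rewrite divr_gt0 // mulr_gt0.
  have [K1 HK1] := Hp _ e1.
  have e2 : 0 < c ^+ 2 / (2 * (N h + 1)) by rewrite divr_gt0 // mulr_gt0.
  have [K2 HK2] := archi_small e2.
  pose n := maxn K1 K2.
  have n1 := HK1 n (leq_maxl _ _); have n2 := HK2 n (leq_maxr _ _).
  rewrite ger0_norm ?HP // in n1.
  have cs := CSbound (ds n - p) h.
  have gb : 16 * (ip (ds n - p) h) ^+ 2 < c ^+ 2.
    have : (N h + 1) * N (ds n - p) < c ^+ 2 / 16.
      have -> : c ^+ 2 / 16 = (N h + 1) * (c ^+ 2 / (16 * (N h + 1))).
        by field; rewrite gt_eqF.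
      by rewrite ltr_pM2l.
    lra.
  have k := key n (c / (N h + 1)); rewrite dec in k.
  apply: (arith (M := N h + 1) _ _ (HP h) cn0 gb k n2) => //.
have px : p = x by apply/esym/subr0_eq/Orth.
rewrite px in Hp; have [K HK] := Hp e e0.
exists (ds K) => //; rewrite -opprB Nopp; exact: HK.
Qed.
End RealDense.

Lemma gen_part (K : numFieldType) (conj : K -> K) (H W : lmodType K)
  (ipH : H -> H -> K) (ipK : W -> W -> K) (DS : set H) (S : H -> W)
  (DT : set W) (T : W -> H) :
 conj 0 = 0 ->
 is_inner_product conj ipH -> is_inner_product conj ipK ->
 linear_operator DS S -> linear_operator DT T ->
 (forall y, exists2 x, DS x & S x = y /\ in_adjoint ipH ipK DT T x (S x)) ->
 (forall x, exists2 y, DT y & T y = x /\ in_adjoint ipK ipH DS S y (T y)) ->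
 [/\ (forall z, (forall h, DS h -> ipH h z = 0) -> z = 0),
     (forall z, (forall h, DT h -> ipK h z = 0) -> z = 0),
     (forall k' h', in_adjoint ipK ipH DS S k' h' <-> DT k' /\ h' = T k') &
     (forall h' k', in_adjoint ipH ipK DT T h' k' <-> DS h' /\ k' = S h')].
Proof.
move=> c0 IH IK LS LT h1 h2.
have A1 := adj_char IH IK LS LT h1 h2.
have A2 := adj_char IK IH LT LS h2 h1.
split => // z Hz.
- have [_ ->] : DT 0 /\ z = T 0.
    apply/A1 => h Dh; rewrite Hz //.
    by have [_ KC _ _] := IK; rewrite KC (ip0l IK) c0.
  exact: lin0 LT.
- have [_ ->] : DS 0 /\ z = S 0.
    apply/A2 => h Dh; rewrite Hz //.
    by have [_ HC _ _] := IH; rewrite HC (ip0l IH) c0.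
  exact: lin0 LS.
Qed.

Section CAlias.
Variables (R : realType) (V : lmodType R[i]).
Definition RV : Type := V.
HB.instance Definition _ := GRing.Zmodule.on RV.
Definition rscale (a : R) (v : RV) : RV := ((a%:C)%C *: (v : V)).
Lemma rscaleA a b v : rscale a (rscale b v) = rscale (a * b) v.
Proof. by rewrite /rscale scalerA rmorphM. Qed.
Lemma rscale1 : left_id 1 rscale.
Proof. by move=> v; rewrite /rscale rmorph1 scale1r. Qed.
Lemma rscaleDr : right_distributive rscale +%R.
Proof. by move=> a u v; rewrite /rscale scalerDr. Qed.
Lemma rscaleDl v : {morph rscale^~ v : a b / a + b}.
Proof. by move=> a b; rewrite /rscale rmorphD scalerDl. Qed.
HB.instance Definition _ := GRing.Zmodule_isLmodule.Build R RV
  rscaleA rscale1 rscaleDr rscaleDl.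
End CAlias.

Lemma Re_lin (R : realType) (a : R) (w u : R[i]) :
  complex.Re ((a%:C)%C * w + u) = a * complex.Re w + complex.Re u.
Proof. by case: w u => [w1 w2] [u1 u2]; rewrite /= mul0r subr0. Qed.

Lemma Re_conj' (R : realType) (w : R[i]) : complex.Re (Num.conj w) = complex.Re w.
Proof.
have : ((complex.Re (Num.conj w))%:C)%C = ((complex.Re w)%:C)%C.
  by rewrite !complexRe Re_conj.
by move/(congr1 (@complex.Re R)).
Qed.

Lemma normlt (R : realType) (w e : R[i]) : 0 <= w -> 0 < e ->
  (`|w| < e) <-> (complex.Re w < complex.Re e).
Proof.
move=> w0 e0; rewrite ger0_norm // ltcE.
move: e0 w0; rewrite ltcE lecE => /andP[/eqP e1 _] /andP[/eqP w1 _].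
by rewrite e1 w1 eqxx.
Qed.

Lemma complex_dense (R : realType) (V : lmodType R[i]) (ip : V -> V -> R[i])
  (D : set V) :
  hilbert Num.conj ip -> D 0 -> (forall a x y, D x -> D y -> D (a *: x + y)) ->
  (forall z, (forall h, D h -> ip h z = 0) -> z = 0) ->
  ip_dense ip D.
Proof.
move=> [[HL HC HP HD] Hc] D0 DL Orth.
pose ipR (u v : RV V) : R := complex.Re (ip u v).
have HPR : forall x, 0 <= ipR x x.
  by move=> x; have := HP x; rewrite lecE => /andP[_].
have Im0 : forall x, complex.Im (ip x x) = 0.
  by move=> x; have := HP x; rewrite lecE => /andP[/eqP -> _].
have IR : is_inner_product id ipR.
  split => //.
  - by move=> a x y z; rewrite /ipR /= HL Re_lin.
  - by move=> x y; rewrite /ipR HC Re_conj'.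
  - move=> x; rewrite /ipR => e; apply: HD.
    by have := Im0 x; case: (ip x x) e => a b /= -> ->.
have nR : forall x (e : R), 0 < e -> (`|ipR x x| < e) <-> (`|ip x x| < (e%:C)%C).
  move=> x e e0; rewrite normlt //; last by rewrite ltcR.
  by rewrite ger0_norm.
have cR : ip_complete ipR.
  move=> u Hu.
  have [x Hx] : exists x : V, forall e : R[i], 0 < e -> exists N : nat,
      forall n, (N <= n)%N -> `|ip (u n - x) (u n - x)| < e.
    apply: Hc => e e0.
    have e0' : 0 < complex.Re e by move: e0; rewrite ltcE => /andP[].
    have [N HN] := Hu _ e0'; exists N => n m Nn Nm.
    have := HN n m Nn Nm; rewrite ger0_norm // normlt //.
  exists x => e e0; have e0C : 0 < (e%:C)%C by rewrite ltcR.
  have [N HN] := Hx _ e0C.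
  by exists N => n Nn; apply/nR => //; exact: HN.
have DR0 : (D : set (RV V)) 0 by [].
have DRL : forall (a : R) (x y : RV V), D x -> D y -> D (a *: x + y).
  by move=> a x y Dx Dy; apply: DL.
have OR : forall z : RV V, (forall h, D h -> ipR h z = 0) -> z = 0.
  move=> z Hz; apply: Orth => h Dh.
  have e1 := Hz h Dh.
  have Dih : D ((Complex 0 1) *: h + 0) by apply: DL.
  have e2 := Hz _ Dih.
  rewrite /ipR HL (ip0l (And4 HL HC HP HD)) addr0 in e2.
  rewrite /ipR in e1.
  move: e1 e2; case: (ip h z) => a b /= -> .
  by rewrite !mul0r mul1r sub0r => /eqP; rewrite oppr_eq0 => /eqP ->.
have := dense_real IR cR DR0 DRL OR.
move=> dR x e e0.
have e0' : 0 < complex.Re e by move: e0; rewrite ltcE => /andP[].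
have [d Dd Hd] := dR x _ e0'.
exists d => //; apply/normlt => //.
by rewrite ger0_norm in Hd.
Qed.

Theorem proposition3p4 (R : realType) :
  (forall (H Kk : lmodType R) (ipH : H -> H -> R) (ipK : Kk -> Kk -> R)
          (DS : set H) (S : H -> Kk) (DT : set Kk) (T : Kk -> H),
     hilbert id ipH -> hilbert id ipK ->
     linear_operator DS S -> linear_operator DT T ->
     (forall y : Kk, exists2 x, DS x & S x = y /\ in_adjoint ipH ipK DT T x (S x)) ->
     (forall x : H, exists2 y, DT y & T y = x /\ in_adjoint ipK ipH DS S y (T y)) ->
     [/\ ip_dense ipH DS, ip_dense ipK DT,
         (forall k' h', in_adjoint ipK ipH DS S k' h' <-> DT k' /\ h' = T k') &
         (forall h' k', in_adjoint ipH ipK DT T h' k' <-> DS h' /\ k' = S h')]) /\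
  (forall (H Kk : lmodType R[i]) (ipH : H -> H -> R[i]) (ipK : Kk -> Kk -> R[i])
          (DS : set H) (S : H -> Kk) (DT : set Kk) (T : Kk -> H),
     hilbert Num.conj ipH -> hilbert Num.conj ipK ->
     linear_operator DS S -> linear_operator DT T ->
     (forall y : Kk, exists2 x, DS x & S x = y /\ in_adjoint ipH ipK DT T x (S x)) ->
     (forall x : H, exists2 y, DT y & T y = x /\ in_adjoint ipK ipH DS S y (T y)) ->
     [/\ ip_dense ipH DS, ip_dense ipK DT,
         (forall k' h', in_adjoint ipK ipH DS S k' h' <-> DT k' /\ h' = T k') &
         (forall h' k', in_adjoint ipH ipK DT T h' k' <-> DS h' /\ k' = S h')]).
Proof.
split.
- move=> H Kk ipH ipK DS S DT T hH hK LS LT h1 h2.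
  have [o1 o2 a3 a4] := gen_part (conj := id) erefl hH.1 hK.1 LS LT h1 h2.
  split => //.
  + apply: (dense_real hH.1 hH.2 LS.1 _ o1).
    by move=> a x y Dx Dy; case: (LS.2 a x y Dx Dy).
  + apply: (dense_real hK.1 hK.2 LT.1 _ o2).
    by move=> a x y Dx Dy; case: (LT.2 a x y Dx Dy).
- move=> H Kk ipH ipK DS S DT T hH hK LS LT h1 h2.
  have [o1 o2 a3 a4] := gen_part (conjC0 _) hH.1 hK.1 LS LT h1 h2.
  split => //.
  + apply: (complex_dense hH LS.1 _ o1).
    by move=> a x y Dx Dy; case: (LS.2 a x y Dx Dy).
  + apply: (complex_dense hK LT.1 _ o2).
    by move=> a x y Dx Dy; case: (LT.2 a x y Dx Dy).
Qed.
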